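(* Let $d\ge 2$, $2\le k\le d+1$, and let $y_1,\dots,y_N\in\{1,\dots,k\}$ be labels (the dataset may be class-balanced or class-imbalanced). Let $s>0$ and, for each $i$, let $\alpha_{i1}\ge\frac12$, $\alpha_{i2}\le\alpha_{i1}$, $\beta_{i1},\beta_{i2}\in\mathbb R$. For $\boldsymbol w_1,\dots,\boldsymbol w_k,\boldsymbol z_1,\dots,\boldsymbol z_N\in\mathbb S^{d-1}$ define the GM-Softmax empirical risk $$L=\frac1N\sum_{i=1}^N-\log\frac{\exp(s(\alpha_{i1}\boldsymbol w_{y_i}^{\mathrm T}\boldsymbol z_i+\beta_{i1}))}{\exp(s(\alpha_{i2}\boldsymbol w_{y_i}^{\mathrm T}\boldsymbol z_i+\beta_{i2}))+\sum_{j\ne y_i}\exp(s\boldsymbol w_j^{\mathrm T}\boldsymbol z_i)}.$$ Then for all such configurations satisfying $\sum_{j=1}^k\boldsymbol w_j=0$, $$L\ge\frac1N\sum_{i=1}^N\log\Big[\exp\big(s(\alpha_{i2}-\alpha_{i1}+\beta_{i2}-\beta_{i1})\big)+(k-1)\exp\big(-s(\tfrac1{k-1}+\alpha_{i1}+\beta_{i1})\big)\Big],$$ with equality if and only if $\boldsymbol w_i^{\mathrm T}\boldsymbol w_j=-\frac1{k-1}$ for all $i\ne j$ and $\boldsymbol z_i=\boldsymbol w_{y_i}$ for all $i$. Consequently the minimizers of $L$ subject to $\sum_j\boldsymbol w_j=0$ have the largest possible class margin $\arccos\frac{-1}{k-1}$ and the largest possible minimal sample margin $\frac{k}{k-1}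$.
   Context: $\mathbb S^{d-1}$ is the unit sphere in $\mathbb R^d$. Class margin: $m_c(\{\boldsymbol w_i\})=\arccos\big[\max_{i\ne j}\boldsymbol w_i^{\mathrm T}\boldsymbol w_j\big]$ for unit prototypes. Minimal sample margin: $\gamma_{\min}=\min_i\big(\boldsymbol w_{y_i}^{\mathrm T}\boldsymbol z_i-\max_{j\ne y_i}\boldsymbol w_j^{\mathrm T}\boldsymbol z_i\big)$. *)

(* Defs.v *)
From HB Require Import structures.
From mathcomp Require Import all_boot all_order all_algebra.
From mathcomp Require Import all_classical all_reals all_analysis.
Set Implicit Arguments. Unset Strict Implicit. Unset Printing Implicit Defensive.
Import Order.TTheory GRing.Theory Num.Theory.
Local Open Scope classical_set_scope.
Local Open Scope ring_scope.

Section Defs.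
Variables (R : realType) (d k N : nat).

Definition dotv (u v : 'rV[R]_d) : R := \sum_(t < d) u ord0 t * v ord0 t.

Definition on_sphere (u : 'rV[R]_d) : Prop := dotv u u = 1.

Definition GM_loss (s : R) (a1 a2 b1 b2 : 'I_N -> R) (y : 'I_N -> 'I_k)
    (W : 'I_k -> 'rV[R]_d) (Z : 'I_N -> 'rV[R]_d) : R :=
  (N%:R)^-1 * \sum_(i < N)
    - ln (expR (s * (a1 i * dotv (W (y i)) (Z i) + b1 i)) /
          (expR (s * (a2 i * dotv (W (y i)) (Z i) + b2 i)) +
           \sum_(j < k | j != y i) expR (s * dotv (W j) (Z i)))).

Definition GM_bound (s : R) (a1 a2 b1 b2 : 'I_N -> R) : R :=
  (N%:R)^-1 * \sum_(i < N)
    ln (expR (s * (a2 i - a1 i + b2 i - b1 i)) +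
        (k.-1)%:R * expR (- (s * (((k.-1)%:R)^-1 + a1 i + b1 i)))).

Definition class_margin (W : 'I_k -> 'rV[R]_d) : R :=
  acos (sup [set dotv (W p.1) (W p.2) | p in [set p : 'I_k * 'I_k | p.1 != p.2]]).

Definition sample_margin (y : 'I_N -> 'I_k) (W : 'I_k -> 'rV[R]_d)
    (Z : 'I_N -> 'rV[R]_d) (i : 'I_N) : R :=
  dotv (W (y i)) (Z i) - sup [set dotv (W j) (Z i) | j in [set j | j != y i]].

Definition min_sample_margin (y : 'I_N -> 'I_k) (W : 'I_k -> 'rV[R]_d)
    (Z : 'I_N -> 'rV[R]_d) : R :=
  inf [set sample_margin y W Z i | i in [set: 'I_N]].

Definition feasible (W : 'I_k -> 'rV[R]_d) (Z : 'I_N -> 'rV[R]_d) : Prop :=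
  (forall j, on_sphere (W j)) /\ (forall i, on_sphere (Z i)) /\
  \sum_(j < k) W j = 0.

End Defs.

(* Main.v *)
Require Import Defs.
From HB Require Import structures.
From mathcomp Require Import all_boot all_order all_algebra.
From mathcomp Require Import all_classical all_reals all_analysis.
From mathcomp Require Import ring lra.
Import Order.TTheory GRing.Theory Num.Theory.
Local Open Scope classical_set_scope.
Local Open Scope ring_scope.
Set Implicit Arguments. Unset Strict Implicit.

Section Dot.
Variables (R : realType) (d : nat).
Implicit Types u v w : 'rV[R]_d.

Lemma dotvC u v : dotv u v = dotv v u.
Proof. by apply: eq_bigr => t _; rewrite mulrC. Qed.

Lemma dotvDl u v w : dotv (u + v) w = dotv u w + dotv v w.
Proof. by rewrite /dotv -big_split; apply: eq_bigr => t _; rewrite mxE mulrDl. Qed.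

Lemma dotvZl a u w : dotv (a *: u) w = a * dotv u w.
Proof. by rewrite /dotv mulr_sumr; apply: eq_bigr => t _; rewrite mxE mulrA. Qed.

Lemma dotvNl u w : dotv (- u) w = - dotv u w.
Proof. by rewrite -scaleN1r dotvZl mulN1r. Qed.

Lemma dotvBl u v w : dotv (u - v) w = dotv u w - dotv v w.
Proof. by rewrite dotvDl dotvNl. Qed.

Lemma dotv0l w : dotv 0 w = 0.
Proof. by rewrite /dotv big1 // => t _; rewrite mxE mul0r. Qed.

Lemma dotvDr u v w : dotv w (u + v) = dotv w u + dotv w v.
Proof. by rewrite dotvC dotvDl !(dotvC w). Qed.
Lemma dotvZr a u w : dotv w (a *: u) = a * dotv w u.
Proof. by rewrite dotvC dotvZl dotvC. Qed.
Lemma dotvBr u v w : dotv w (u - v) = dotv w u - dotv w v.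
Proof. by rewrite dotvC dotvBl !(dotvC w). Qed.

Lemma dotv_suml (I : finType) (F : I -> 'rV[R]_d) w :
  dotv (\sum_i F i) w = \sum_i dotv (F i) w.
Proof.
apply: (big_ind2 (fun a b => dotv a w = b)) => //; first exact: dotv0l.
by move=> a b c e <- <-; rewrite dotvDl.
Qed.

Lemma dotv_ge0 u : 0 <= dotv u u.
Proof. by apply: sumr_ge0 => t _; rewrite -expr2 sqr_ge0. Qed.

Lemma dotv_eq0 u : dotv u u = 0 -> u = 0.
Proof.
move=> /eqP; rewrite psumr_eq0; last by move=> t _; rewrite -expr2 sqr_ge0.
move=> /allP H; apply/rowP => t; rewrite mxE.
by have := H t (mem_index_enum _); rewrite -expr2 sqrf_eq0 => /eqP.
Qed.
End Dot.

Section Key.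
Variable R : realType.

Lemma count_neq (k : nat) (yc : 'I_k) :
  \sum_(j < k | j != yc) (1 : R) = (k.-1)%:R.
Proof. by rewrite sumr_const cardC1 card_ord. Qed.

Lemma jensen (k : nat) (yc : 'I_k) (s m : R) (x : 'I_k -> R) :
  \sum_(j < k | j != yc) x j = (k.-1)%:R * m ->
  (k.-1)%:R * expR (s * m) <= \sum_(j < k | j != yc) expR (s * x j) /\
  ((k.-1)%:R * expR (s * m) = \sum_(j < k | j != yc) expR (s * x j) ->
   forall j, j != yc -> s * x j = s * m).
Proof.
move=> hsum.
set g := fun j : 'I_k => expR (s * m) * (1 + (s * x j - s * m)).
have hg : \sum_(j < k | j != yc) g j = (k.-1)%:R * expR (s * m).
  rewrite /g -mulr_sumr big_split /= count_neq.
  rewrite (eq_bigr (fun j => s * x j + (- (s * m)))) // big_split /=.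
  rewrite -mulr_sumr hsum sumr_const cardC1 card_ord.
  rewrite -mulr_natr; ring.
have hle : forall j, g j <= expR (s * x j).
  move=> j; rewrite /g.
  have -> : expR (s * x j) = expR (s * m) * expR (s * x j - s * m).
    by rewrite -expRD addrC subrK.
  by apply: ler_wpM2l; [exact: expR_ge0|exact: expR_ge1Dx].
split.
  by rewrite -hg; apply: ler_sum => j _; exact: hle.
move=> heq j hj.
have : \sum_(j < k | j != yc) (expR (s * x j) - g j) = 0.
  by rewrite sumrB hg heq subrr.
move/eqP; rewrite psumr_eq0; last by move=> i _; rewrite subr_ge0 hle.
move=> /allP /(_ j (mem_index_enum _)); rewrite hj /= subr_eq0 => /eqP hE.
apply/eqP; rewrite -subr_eq0; apply/negPn/negP => hne.
have := expR_gt1Dx hne.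
have : expR (s * x j) = expR (s * m) * expR (s * x j - s * m).
  by rewrite -expRD addrC subrK.
move: hE; rewrite /g => -> /(mulfI _) ->; first by rewrite ltxx.
by rewrite gt_eqF ?expR_gt0.
Qed.

Lemma key_term (k : nat) (yc : 'I_k) (s u a1 a2 b1 b2 : R) (x : 'I_k -> R) :
  (2 <= k)%N -> 0 < s -> 1 / 2 <= a1 -> a2 <= a1 -> u <= 1 ->
  \sum_(j < k | j != yc) x j = - u ->
  let L := - ln (expR (s * (a1 * u + b1)) /
          (expR (s * (a2 * u + b2)) + \sum_(j < k | j != yc) expR (s * x j))) in
  let B := ln (expR (s * (a2 - a1 + b2 - b1)) +
        (k.-1)%:R * expR (- (s * (((k.-1)%:R)^-1 + a1 + b1)))) in
  B <= L /\ (L = B -> u = 1 /\ forall j, j != yc -> x j = - ((k.-1)%:R)^-1) /\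
  ((u = 1 /\ forall j, j != yc -> x j = - ((k.-1)%:R)^-1) -> L = B).
Proof.
move=> hk hs ha1 ha2 hu hsum L B.
have hn1 : 1 <= (k.-1)%:R :> R by rewrite ler1n; case: (k) hk => [|[]].
set n : R := (k.-1)%:R in hn1 *.
have hn : 0 < n by lra.
set m := - u / n.
have hsm : \sum_(j < k | j != yc) x j = n * m.
  by rewrite hsum /m mulrC divfK // gt_eqF.
have [hJ hJe] := @jensen k yc s m x hsm.
set S := \sum_(j < k | j != yc) expR (s * x j).
set P := s * (a1 * u + b1).
set Q := s * (a2 * u + b2).
have hS : 0 < S by apply: lt_le_trans hJ; rewrite mulr_gt0 ?expR_gt0.
have hL : L = ln (expR (Q - P) + S * expR (- P)).
  rewrite /L -lnV; last by rewrite posrE divr_gt0 ?addr_gt0 ?expR_gt0.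
  by rewrite invf_div /Q /P /S expRB expRN mulrDl.
set X0 := expR (s * (a2 - a1 + b2 - b1)).
set Y0 := n * expR (- (s * (n^-1 + a1 + b1))).
have hX : X0 <= expR (Q - P).
  rewrite ler_expR /Q /P.
  have : 0 <= (a1 - a2) * (1 - u) by rewrite mulr_ge0 // subr_ge0.
  move=> h; rewrite -mulrBr ler_pM2l //; nra.
have hY1 : n * expR (s * m - P) <= S * expR (- P).
  by rewrite expRB -expRN mulrA ler_wpM2r ?expR_ge0.
have hcoef : 0 < n^-1 + a1 by rewrite addr_gt0 ?invr_gt0 //; lra.
have hY2 : Y0 <= n * expR (s * m - P).
  rewrite /Y0 ler_pM2l // ler_expR /m /P.
  have -> : s * (- u / n) - s * (a1 * u + b1) = - (s * (u * (n^-1 + a1) + b1)).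
    by rewrite /m mulNr; ring.
  rewrite lerN2 ler_pM2l // lerD2r -[X in _ <= X]mul1r ler_pM2r //.
have hpos : forall a b : R, 0 < a -> 0 < b -> a \in Num.pos /\ b \in Num.pos.
  by move=> a b ha hb; rewrite !posrE.
have hX0 : 0 < X0 by rewrite expR_gt0.
have hY0 : 0 < Y0 by rewrite mulr_gt0 ?expR_gt0.
split.
  rewrite hL /B ler_ln ?posrE ?addr_gt0 ?mulr_gt0 ?expR_gt0 //.
  by apply: lerD => //; apply: le_trans hY2 hY1.
split.
  move=> hLB.
  have heq : expR (Q - P) + S * expR (- P) = X0 + Y0.
    apply: ln_inj; rewrite ?posrE ?addr_gt0 ?mulr_gt0 ?expR_gt0 //.
    by rewrite -hL hLB.
  have e1 : n * expR (s * m - P) = Y0 by lra.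
  have e2 : S * expR (- P) = n * expR (s * m - P) by lra.
  have hu1 : u = 1.
    move: e1; rewrite /Y0 => /(mulfI (lt0r_neq0 hn)) /expR_inj.
    have -> : s * m - P = - (s * (u * (n^-1 + a1) + b1)).
      by rewrite /m /P mulNr; ring.
    move=> /oppr_inj /(mulfI (lt0r_neq0 hs)) /addIr.
    rewrite -[X in _ = X]mul1r => /(mulIf (lt0r_neq0 hcoef)) //.
  split => // j hj.
  have hSe : n * expR (s * m) = S.
    by move: e2; rewrite expRB -expRN mulrA => /(mulIf (lt0r_neq0 (expR_gt0 _))).
  have := hJe hSe j hj => /(mulfI (lt0r_neq0 hs)) ->.
  by rewrite /m hu1 mulNr mul1r.
move=> [hu1 hx].
have hS1 : S = n * expR (s * (- n^-1)).
  rewrite /S (eq_bigr (fun _ => expR (s * (- n^-1)))); last first.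
    by move=> j hj; rewrite hx.
  by rewrite sumr_const cardC1 card_ord -mulr_natl.
rewrite hL /B; congr (ln (_ + _)).
  by congr expR; rewrite /Q /P hu1; ring.
rewrite hS1 -mulrA -expRD; congr (_ * expR _).
rewrite /P hu1; ring.
Qed.
End Key.

Section Simplex.
Variables (R : realType) (d n : nat).
Hypothesis hnd : (n <= d)%N.

Definition Ev (i : nat) : 'rV[R]_d := \row_(t < d) ((t : nat) == i)%:R.
Definition ONE : 'rV[R]_d := \row_(t < d) ((t : nat) < n)%:R.

Lemma dotv_E i v (hi : (i < d)%N) : dotv (Ev i) v = v ord0 (Ordinal hi).
Proof.
rewrite /dotv (bigD1 (Ordinal hi)) //= big1 ?addr0.
  by rewrite mxE eqxx mul1r.
move=> t ht; rewrite mxE.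
have -> : ((t : nat) == i) = false.
  by apply/negbTE; apply: contra ht => /eqP h; apply/eqP/val_inj.
by rewrite mul0r.
Qed.

Lemma dotEE i j : (i < n)%N -> (j < n)%N -> dotv (Ev i) (Ev j) = (i == j)%:R.
Proof.
move=> hi hj; rewrite (dotv_E _ (leq_trans hi hnd)) mxE /=.
by rewrite eq_sym.
Qed.

Lemma dotE1 i : (i < n)%N -> dotv (Ev i) ONE = 1.
Proof. by move=> hi; rewrite (dotv_E _ (leq_trans hi hnd)) mxE /= hi. Qed.

Lemma dot1E i : (i < n)%N -> dotv ONE (Ev i) = 1.
Proof. by move=> hi; rewrite dotvC dotE1. Qed.

Lemma dot11 : dotv ONE ONE = n%:R.
Proof.
rewrite /dotv (eq_bigr (fun t : 'I_d => if ((t : nat) < n)%N then 1 else 0 : R)); last first.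
  by move=> t _; rewrite !mxE; case: (_ < _)%N; rewrite ?mulr1 ?mulr0.
rewrite -big_mkcond /= -(big_ord_widen d (fun _ => (1 : R)) hnd).
by rewrite sumr_const card_ord.
Qed.
End Simplex.

Section Simplex2.
Variables (R : realType) (d : nat).

Lemma sum_zero_of_gram (k : nat) (W : 'I_k -> 'rV[R]_d) : (1 < k)%N ->
  (forall j, dotv (W j) (W j) = 1) ->
  (forall i j, i != j -> dotv (W i) (W j) = - ((k.-1)%:R)^-1) ->
  \sum_j W j = 0.
Proof.
move=> hk h1 h2; apply: dotv_eq0.
rewrite dotv_suml big1 // => i _.
rewrite dotvC dotv_suml (bigD1 i) //= h1.
rewrite (eq_bigr (fun _ => - ((k.-1)%:R)^-1)); last first.
  by move=> j hj; rewrite h2.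
rewrite sumr_const cardC1 card_ord.
have hn : ((k.-1)%:R : R) != 0 by rewrite pnatr_eq0 -lt0n; case: (k) hk => [|[]].
by rewrite -mulr_natr; field.
Qed.

Lemma alg1 (p q : R) : 0 < p -> q ^+ 2 = p ^+ 2 + 1 ->
  (q / p) ^+ 2 + 2 * (q / p) * ((1 / p - q / p) / p ^+ 2)
  + p ^+ 2 * ((1 / p - q / p) / p ^+ 2) ^+ 2 = 1.
Proof.
move=> hp hq; apply/eqP; rewrite -subr_eq0; apply/eqP.
have hp0 : p != 0 by rewrite gt_eqF.
transitivity ((q ^+ 2 - p ^+ 2 - 1) * (p ^+ 2 - 1) / p ^+ 4).
  by field.
by rewrite hq; field.
Qed.

Lemma alg3 (p q : R) : 0 < p -> q ^+ 2 = p ^+ 2 + 1 ->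
  2 * (q / p) * ((1 / p - q / p) / p ^+ 2)
  + p ^+ 2 * ((1 / p - q / p) / p ^+ 2) ^+ 2 = - (p ^+ 2)^-1.
Proof.
move=> hp hq; apply/eqP; rewrite -subr_eq0; apply/eqP.
have hp0 : p != 0 by rewrite gt_eqF.
transitivity (- (q ^+ 2 - p ^+ 2 - 1) / p ^+ 4).
  by field.
by rewrite hq; field.
Qed.

End Simplex2.

Section Simplex3.
Variables (R : realType) (d : nat).

Lemma simplex_exists (k : nat) : (2 <= k)%N -> (k <= d.+1)%N ->
  exists W : 'I_k -> 'rV[R]_d, (forall j, on_sphere (W j)) /\
    (forall i j, i != j -> dotv (W i) (W j) = - ((k.-1)%:R)^-1) /\
    \sum_j W j = 0.
Proof.
move=> hk hkd.
have hnd : (k.-1 <= d)%N by rewrite -ltnS prednK // ltnW.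
set n := k.-1 in hnd *.
have hkn : k = n.+1 by rewrite /n prednK // ltnW.
have hn0 : (0 < n)%N by rewrite /n -ltnS prednK // ltnW.
set p : R := Num.sqrt (n%:R).
set q : R := Num.sqrt (k%:R).
have hp : 0 < p by rewrite sqrtr_gt0 ltr0n.
have hp2 : p ^+ 2 = n%:R by rewrite sqr_sqrtr ?ler0n.
have hq2 : q ^+ 2 = p ^+ 2 + 1 by rewrite sqr_sqrtr ?ler0n // hp2 hkn -natr1.
have hp0 : p != 0 by rewrite gt_eqF.
set a := q / p.
set b := (1 / p - q / p) / p ^+ 2.
set c := - p^-1.
pose W (i : 'I_k) : 'rV[R]_d :=
  if (i < n)%N then a *: Ev R d i + b *: ONE R d n else c *: ONE R d n.
have G : forall i j, dotv (W i) (W j) = if i == j then 1 else - (n%:R)^-1.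
  move=> i j; rewrite /W.
  have hi := ltn_ord i; have hj := ltn_ord j.
  case: (ltnP i n) => hin; case: (ltnP j n) => hjn.
  - rewrite !(dotvDl, dotvDr, dotvZl, dotvZr) (@dotEE R d n hnd) // (@dotE1 R d n hnd) // (@dot1E R d n hnd) // (@dot11 R d n hnd) //.
    case: eqP => [/val_inj ->|hne]; rewrite ?eqxx.
      have h := @alg1 _ _ _ hp hq2; rewrite -/a -/b in h.
      by rewrite -hp2 -[RHS]h /=; ring.
    have -> : (i == j) = false by apply/negbTE/eqP => hij; apply: hne; rewrite hij.
    have h := @alg3 _ _ _ hp hq2; rewrite -/a -/b in h.
    by rewrite -hp2 -[RHS]h /=; ring.
  - have -> : (i == j) = false.
      by apply/negbTE; apply/eqP => hij; move: hin; rewrite hij ltnNge hjn.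
    rewrite !(dotvDl, dotvDr, dotvZl, dotvZr) (@dotE1 R d n hnd) // (@dot11 R d n hnd) //.
    rewrite -hp2 /a /b /c; by field.
  - have -> : (i == j) = false.
      by apply/negbTE; apply/eqP => hij; move: hjn; rewrite -hij ltnNge hin.
    rewrite !(dotvDl, dotvDr, dotvZl, dotvZr) (@dot1E R d n hnd) // (@dot11 R d n hnd) //.
    rewrite -hp2 /a /b /c; by field.
  - have -> : i = j.
      apply: val_inj; apply/eqP; rewrite eqn_leq.
      have hi' : (i <= n)%N by rewrite -ltnS -hkn.
      have hj' : (j <= n)%N by rewrite -ltnS -hkn.
      by rewrite (leq_trans hi' hjn) (leq_trans hj' hin).
    rewrite eqxx !(dotvZl, dotvZr) (@dot11 R d n hnd) //.
    rewrite -hp2 /c; by field.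
exists W; split; [|split].
- by move=> j; rewrite /on_sphere G eqxx.
- by move=> i j hij; rewrite G (negbTE hij).
- apply: sum_zero_of_gram => //.
  + by move=> j; rewrite G eqxx.
  + by move=> i j hij; rewrite G (negbTE hij).
Qed.
End Simplex3.

Section Helpers.
Variable R : realType.

Lemma dot_sq d (u v : 'rV[R]_d) :
  dotv (u - v) (u - v) = dotv u u - 2 * dotv u v + dotv v v.
Proof. rewrite !(dotvBl, dotvBr) (@dotvC R d v u); ring. Qed.

Lemma dot_le1 d (u v : 'rV[R]_d) : on_sphere u -> on_sphere v -> dotv u v <= 1.
Proof.
rewrite /on_sphere => hu hv; have := dotv_ge0 (u - v).
rewrite dot_sq hu hv; lra.
Qed.

Lemma dot_eq1 d (u v : 'rV[R]_d) : on_sphere u -> on_sphere v -> dotv u v = 1 -> u = v.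
Proof.
rewrite /on_sphere => hu hv h; apply/eqP; rewrite -subr_eq0; apply/eqP.
by apply: dotv_eq0; rewrite dot_sq hu hv h; ring.
Qed.

Lemma fin_has_ub (T : finType) (A : set T) (f : T -> R) :
  has_ubound [set f j | j in A].
Proof.
exists (\sum_j `|f j|) => _ [j _ <-].
rewrite (bigD1 j) //=; apply: le_trans (ler_norm _) _.
by rewrite lerDl sumr_ge0.
Qed.

Lemma fin_has_lb (T : finType) (A : set T) (f : T -> R) :
  has_lbound [set f j | j in A].
Proof.
exists (- \sum_j `|f j|) => _ [j _ <-].
rewrite (bigD1 j) //= lerNl; apply: le_trans (ler_norm (- f j)) _; rewrite normrN.
by rewrite lerDl sumr_ge0.
Qed.

Lemma sup_const (E : set R) c : E !=set0 -> (forall x, E x -> x = c) -> sup E = c.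
Proof.
move=> [x Ex] h; apply/eqP; rewrite eq_le; apply/andP; split.
  by apply: ge_sup; [exists x | move=> z /h ->].
have hub : has_ubound E by exists c => z /h ->.
by rewrite -(h x Ex); apply: ub_le_sup.
Qed.

Lemma inf_const (E : set R) c : E !=set0 -> (forall x, E x -> x = c) -> inf E = c.
Proof.
move=> [x Ex] h; apply/eqP; rewrite eq_le; apply/andP; split; last first.
  by apply: lb_le_inf; [exists x | move=> z /h ->].
have hlb : has_lbound E by exists c => z /h ->.
by rewrite -(h x Ex); apply: ge_inf.
Qed.

Lemma acos_anti (x y : R) : -1 <= x -> x <= y -> y <= 1 -> acos y <= acos x.
Proof.
move=> h1 hxy h2; rewrite leNgt; apply/negP => h.
have hx : -1 <= x <= 1 by rewrite h1 /=; lra.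
have hy : -1 <= y <= 1 by rewrite h2 andbT; lra.
have := @ltr_cos R (acos x) (acos y).
rewrite !in_itv /= !acos_ge0 ?acos_lepi // => /(_ isT isT).
rewrite h !acosK ?in_itv //= => hlt; lra.
Qed.
End Helpers.

Lemma part1 (R : realType) (d k N : nat) (hk2 : (2 <= k)%N)
  (y : 'I_N -> 'I_k) (hy : forall c : 'I_k, exists i : 'I_N, y i = c)
  (s : R) (hs : 0 < s) (a1 a2 b1 b2 : 'I_N -> R)
  (ha1 : forall i, 1 / 2 <= a1 i) (ha2 : forall i, a2 i <= a1 i)
  (W : 'I_k -> 'rV[R]_d) (Z : 'I_N -> 'rV[R]_d) : feasible W Z ->
     GM_bound k s a1 a2 b1 b2 <= GM_loss s a1 a2 b1 b2 y W Z /\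
     (GM_loss s a1 a2 b1 b2 y W Z = GM_bound k s a1 a2 b1 b2 <->
        (forall i j : 'I_k, i != j -> dotv (W i) (W j) = - ((k.-1)%:R)^-1) /\
        (forall i : 'I_N, Z i = W (y i))).
Proof.
case=> hW [hZ hS].
have hN : (0 < N)%N.
  have [i _] := hy (Ordinal (leq_trans (isT : (1 < 2)%N) hk2)).
  exact: (leq_ltn_trans (leq0n _) (ltn_ord i)).
have hsum : forall i, \sum_(j < k | j != y i) dotv (W j) (Z i) = - dotv (W (y i)) (Z i).
  move=> i; have : \sum_j dotv (W j) (Z i) = 0 by rewrite -dotv_suml hS dotv0l.
  rewrite (bigD1 (y i)) //= => /eqP; rewrite addrC addr_eq0 => /eqP //.
have K := fun i => @key_term R k (y i) s (dotv (W (y i)) (Z i)) (a1 i) (a2 i) (b1 i) (b2 i)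
   (fun j => dotv (W j) (Z i)) hk2 hs (ha1 i) (ha2 i) (dot_le1 (hW _) (hZ _)) (hsum i).
have hNi : 0 <= (N%:R : R)^-1 by rewrite invr_ge0 ler0n.
have hN0 : (N%:R : R)^-1 != 0 by rewrite invr_eq0 pnatr_eq0 -lt0n.
split.
  by rewrite /GM_loss /GM_bound ler_wpM2l //; apply: ler_sum => i _; exact: (K i).1.
split.
  rewrite /GM_loss /GM_bound => /(mulfI hN0) /eqP; rewrite -subr_eq0 -sumrB => /eqP.
  move/psumr_eq0P => H.
  have Hi : forall i : 'I_N, dotv (W (y i)) (Z i) = 1 /\
      forall j, j != y i -> dotv (W j) (Z i) = - ((k.-1)%:R)^-1.
    move=> i; apply: (K i).2.1; apply/eqP; rewrite -subr_eq0; apply/eqP.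
    by apply: H => // i' _; rewrite subr_ge0; exact: (K i').1.
  have HZ : forall i, Z i = W (y i).
    by move=> i; symmetry; apply: dot_eq1 => //; exact: (Hi i).1.
  split => // i j hij.
  have [i0 hi0] := hy j.
  have := (Hi i0).2 i; rewrite hi0 HZ hi0; apply; exact: hij.
move=> [hWW hZW].
rewrite /GM_loss /GM_bound; congr (_ * _); apply: eq_bigr => i _.
apply: (K i).2.2; split.
  by rewrite hZW; exact: hW.
by move=> j hj; rewrite hZW; apply: hWW.
Qed.

Lemma msm_le (R : realType) (d k N : nat) (hk2 : (2 <= k)%N)
  (y : 'I_N -> 'I_k) (f : 'I_k -> 'I_N) (hf : forall c, y (f c) = c)
  (W : 'I_k -> 'rV[R]_d) (Z : 'I_N -> 'rV[R]_d)
  (hW : forall j, on_sphere (W j)) (hZ : forall i, on_sphere (Z i)) :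
  min_sample_margin y W Z <= k%:R / (k.-1)%:R.
Proof.
set S := \sum_j W j.
set K : R := k%:R.
have hn1 : 1 <= (k.-1)%:R :> R by rewrite ler1n; case: (k) hk2 => [|[]].
set n : R := (k.-1)%:R in hn1 *.
have hKn : K = n + 1 by rewrite /K /n natr1 prednK // ltnW.
have hsm : forall c, 2 * n * K * sample_margin y W Z (f c) <=
    dotv (K *: W c - S) (K *: W c - S) + K * K.
  move=> c; rewrite /sample_margin hf.
  set z := Z (f c).
  set G := [set dotv (W j) z | j in [set j | j != c]].
  have hG : forall j, j != c -> dotv (W j) z <= sup G.
    move=> j hj; apply: (ub_le_sup (fin_has_ub _ _)).
    by exists j.
  have hsumG : \sum_(j < k | j != c) dotv (W j) z <= n * sup G.
    apply: le_trans (ler_sum _ (fun j hj => hG j hj)) _.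
    by rewrite sumr_const cardC1 card_ord -mulr_natl.
  have hSz : dotv S z = dotv (W c) z + \sum_(j < k | j != c) dotv (W j) z.
    by rewrite /S dotv_suml (bigD1 c).
  set A := dotv (K *: W c - S) (K *: W c - S).
  have hsq := dotv_ge0 (K *: W c - S - K *: z).
  rewrite dot_sq -/A dotvZr !(dotvBl, dotvZl, dotvZr) (hZ (f c)) in hsq.
  set P := dotv (W c) z in hSz hsq *.
  set Q := dotv S z in hSz hsq *.
  set g := sup G in hsumG *.
  set T := \sum_(j < k | j != c) dotv (W j) z in hSz hsumG.
  have hK : 0 < K by lra.
  have hprod : 0 <= K * (n * g - Q + P) by apply: mulr_ge0; lra.
  nra.
have hA : forall c, dotv (K *: W c - S) (K *: W c - S) =
    K * K - 2 * K * dotv (W c) S + dotv S S.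
  move=> c; rewrite dot_sq !(dotvZl, dotvZr) (hW c); ring.
have hsumA : \sum_c dotv (K *: W c - S) (K *: W c - S) = K * K * K - K * dotv S S.
  have e : \sum_c dotv (W c) S = dotv S S by rewrite -dotv_suml.
  rewrite (eq_bigr _ (fun c _ => hA c)) big_split /= big_split /= sumrN.
  rewrite -(@mulr_sumr _ _ _ _ _ (2 * K)) e !sumr_const card_ord /K; ring.
set m := min_sample_margin y W Z.
have hm : forall c, m <= sample_margin y W Z (f c).
  move=> c; apply: (ge_inf (fin_has_lb _ _)).
  by exists (f c).
have hK : 0 < K by lra.
have htot : \sum_(c < k) (2 * n * K * m) <= K * K * K - K * dotv S S + K * K * K.
  apply: le_trans (_ : \sum_(c < k) (dotv (K *: W c - S) (K *: W c - S) + K * K) <= _).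
    apply: ler_sum => c _; apply: le_trans (hsm c).
    by rewrite ler_pM2l; [exact: hm | rewrite !mulr_gt0 //; lra].
  by rewrite big_split /= hsumA sumr_const card_ord -[_ *+ k]mulr_natr -/K.
move: htot; rewrite sumr_const card_ord -[_ *+ k]mulr_natr -/K => htot.
have hSS := dotv_ge0 S.
have hKS : 0 <= K * dotv S S by rewrite mulr_ge0 // ltW.
have h1 : K * K * (m * n - K) <= 0 by lra.
rewrite ler_pdivlMr; last lra.
have hKK : 0 < K * K by rewrite mulr_gt0.
by move: h1; rewrite pmulr_rle0 // subr_le0.
Qed.

Lemma cm_le (R : realType) (d k : nat) (hk2 : (2 <= k)%N)
  (W : 'I_k -> 'rV[R]_d) (hW : forall j, on_sphere (W j)) :
  class_margin W <= acos (- ((k.-1)%:R)^-1).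
Proof.
rewrite /class_margin.
set E := [set dotv (W p.1) (W p.2) | p in [set p : 'I_k * 'I_k | p.1 != p.2]].
set M := sup E.
have hk0 : (0 < k)%N by apply: leq_trans hk2.
pose i0 : 'I_k := Ordinal hk0.
pose j0 : 'I_k := Ordinal hk2.
have hij : i0 != j0 by [].
have hne : E !=set0 by exists (dotv (W i0) (W j0)); exists (i0, j0).
have hub : has_ubound E by apply: fin_has_ub.
have hM1 : M <= 1.
  by apply: ge_sup => // _ [p _ <-]; apply: dot_le1.
have hel : forall i j, i != j -> dotv (W j) (W i) <= M.
  by move=> i j hij'; apply: ub_le_sup => //; exists (j, i) => //=; rewrite eq_sym.
have hn1 : 1 <= (k.-1)%:R :> R by rewrite ler1n -ltnS prednK.
set n : R := (k.-1)%:R in hn1 *.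
have hrow : forall i, dotv (W i) (\sum_j W j) <= 1 + n * M.
  move=> i; rewrite dotvC dotv_suml (bigD1 i) //= (hW i) lerD2l.
  have hel' : forall j, j != i -> dotv (W j) (W i) <= M.
    by move=> j h; apply: hel; rewrite eq_sym.
  apply: le_trans (ler_sum _ hel') _.
  by rewrite sumr_const cardC1 card_ord -mulr_natl.
have h0 : 0 <= (1 + n * M) *+ k.
  apply: le_trans (dotv_ge0 (\sum_j W j)) _.
  rewrite dotv_suml; apply: le_trans (ler_sum _ (fun i _ => hrow i)) _.
  by rewrite sumr_const card_ord.
have h0' : 0 <= 1 + n * M.
  by move: h0; rewrite pmulrn_lge0.
have hlow : - n^-1 <= M.
  rewrite -mulN1r ler_pdivrMr; last lra.
  lra.
apply: acos_anti => //.
rewrite lerN2 invf_le1; lra.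
Qed.

Lemma part2 (R : realType) (d k N : nat)
  (hk2 : (2 <= k)%N) (hkd : (k <= d.+1)%N)
  (y : 'I_N -> 'I_k) (hy : forall c : 'I_k, exists i : 'I_N, y i = c)
  (s : R) (hs : 0 < s) (a1 a2 b1 b2 : 'I_N -> R)
  (ha1 : forall i, 1 / 2 <= a1 i) (ha2 : forall i, a2 i <= a1 i)
  (W : 'I_k -> 'rV[R]_d) (Z : 'I_N -> 'rV[R]_d) : feasible W Z ->
     (forall (W' : 'I_k -> 'rV[R]_d) (Z' : 'I_N -> 'rV[R]_d), feasible W' Z' ->
        GM_loss s a1 a2 b1 b2 y W Z <= GM_loss s a1 a2 b1 b2 y W' Z') ->
     class_margin W = acos (- ((k.-1)%:R)^-1) /\
     min_sample_margin y W Z = k%:R / (k.-1)%:R.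
Proof.
move=> hf hmin.
have [W0 [hW0 [hWW0 hS0]]] := @simplex_exists R d k hk2 hkd.
pose Z0 := fun i => W0 (y i).
have hf0 : feasible W0 Z0 by split => //; split => // i; exact: hW0.
have P0 := @part1 R d k N hk2 y hy s hs a1 a2 b1 b2 ha1 ha2 W0 Z0 hf0.
have P := @part1 R d k N hk2 y hy s hs a1 a2 b1 b2 ha1 ha2 W Z hf.
have e0 : GM_loss s a1 a2 b1 b2 y W0 Z0 = GM_bound k s a1 a2 b1 b2.
  by apply/P0.2; split.
have e : GM_loss s a1 a2 b1 b2 y W Z = GM_bound k s a1 a2 b1 b2.
  by apply/eqP; rewrite eq_le P.1 andbT -e0 hmin.
have [hWW hZW] := P.2.1 e.
case: hf => hW [hZ hS].
have hk0 : (0 < k)%N by apply: leq_trans hk2.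
pose i0 : 'I_k := Ordinal hk0.
pose j0 : 'I_k := Ordinal hk2.
have hij : i0 != j0 by [].
split.
  congr acos; apply: sup_const.
    by exists (dotv (W i0) (W j0)); exists (i0, j0).
  by move=> _ [p hp <-]; apply: hWW.
have hn1 : 1 <= (k.-1)%:R :> R by rewrite ler1n -ltnS prednK.
apply: inf_const.
  have [i _] := hy i0.
  by exists (sample_margin y W Z i); exists i.
move=> _ [i _ <-].
rewrite /sample_margin hZW (hW (y i)).
rewrite (@sup_const _ _ (- ((k.-1)%:R)^-1)).
- have -> : (k%:R : R) = (k.-1)%:R + 1 by rewrite natr1 prednK.
  by field; rewrite gt_eqF //; lra.
- have [j hj] : exists j : 'I_k, j != y i.
    case: (eqVneq (y i) i0) => h.
      by exists j0; rewrite h eq_sym.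
    by exists i0; rewrite eq_sym.
  by exists (dotv (W j) (W (y i))); exists j.
- by move=> _ [j hj <-]; apply: hWW.
Qed.

Unset Implicit Arguments.
Theorem theorem5 (R : realType) (d k N : nat)
  (hd : (2 <= d)%N) (hk2 : (2 <= k)%N) (hkd : (k <= d.+1)%N)
  (y : 'I_N -> 'I_k) (hy : forall c : 'I_k, exists i : 'I_N, y i = c)
  (s : R) (hs : 0 < s) (a1 a2 b1 b2 : 'I_N -> R)
  (ha1 : forall i, 1 / 2 <= a1 i) (ha2 : forall i, a2 i <= a1 i) :
  (* lower bound and equality characterization *)
  (forall (W : 'I_k -> 'rV[R]_d) (Z : 'I_N -> 'rV[R]_d), feasible W Z ->
     GM_bound k s a1 a2 b1 b2 <= GM_loss s a1 a2 b1 b2 y W Z /\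
     (GM_loss s a1 a2 b1 b2 y W Z = GM_bound k s a1 a2 b1 b2 <->
        (forall i j : 'I_k, i != j -> dotv (W i) (W j) = - ((k.-1)%:R)^-1) /\
        (forall i : 'I_N, Z i = W (y i)))) /\
  (* minimizers of the constrained problem have these margins *)
  (forall (W : 'I_k -> 'rV[R]_d) (Z : 'I_N -> 'rV[R]_d), feasible W Z ->
     (forall (W' : 'I_k -> 'rV[R]_d) (Z' : 'I_N -> 'rV[R]_d), feasible W' Z' ->
        GM_loss s a1 a2 b1 b2 y W Z <= GM_loss s a1 a2 b1 b2 y W' Z') ->
     class_margin W = acos (- ((k.-1)%:R)^-1) /\
     min_sample_margin y W Z = k%:R / (k.-1)%:R) /\
  (* ... and these are the largest possible values over all unit configurations *)
  (forall (W : 'I_k -> 'rV[R]_d) (Z : 'I_N -> 'rV[R]_d),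
     (forall j, on_sphere (W j)) -> (forall i, on_sphere (Z i)) ->
     class_margin W <= acos (- ((k.-1)%:R)^-1) /\
     min_sample_margin y W Z <= k%:R / (k.-1)%:R).
Proof.
split; first by move=> W Z hf; exact: (@part1 R d k N hk2 y hy s hs a1 a2 b1 b2 ha1 ha2 W Z hf).
split; first by move=> W Z hf hmin; exact: (@part2 R d k N hk2 hkd y hy s hs a1 a2 b1 b2 ha1 ha2 W Z hf hmin).
move=> W Z hW hZ; split; first exact: cm_le.
have [f hf] := choice hy.
exact: (@msm_le R d k N hk2 y f hf W Z hW hZ).
Qed.
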